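(* Let $\alpha\in(0,1)$ be irrational. Then for every integer $n\ge 1$, $$P_\alpha(n)=\#\bigl\{k\in\{1,\dots,n\}:\ k\alpha-\lfloor k\alpha\rfloor\le n\alpha-\lfloor n\alpha\rfloor\bigr\}.$$
   Context: A Sturmian sequence is an aperiodic (not eventually periodic) $1$-balanced sequence over a two-letter alphabet; here a sequence is $1$-balanced if for any two factors $u,v$ of equal length and each letter $x$, $\bigl||u|_x-|v|_x\bigr|\le 1$. For a finite word $w$ over $\{a,b\}$, its Parikh vector is $\Psi(w)=(|w|_a,|w|_b)^T$. For irrational $\alpha\in(0,1)$, let $\mathbf{u}$ be a Sturmian sequence over $\{a,b\}$ in which the letter $b$ has frequency $\alpha$ (the set of factors of such a sequence depends only on $\alpha$). For $n\ge1$, define $P_\alpha(n)$ as the number of factors $u$ of $\mathbf{u}$ of length $n$ with $\Psi(u)=(\lfloor(1-\alpha)n\rfloor,\lceil n\alpha\rceil)^T$. *)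

(* Defs.v *)
(* concrete reals R. Letters: a = false, b = true. *)
From Stdlib Require Import Reals Lra Lia ZArith Arith List.
Open Scope R_scope.

(* floor and ceiling: up x is the unique integer with x < up x <= x + 1 *)
Definition Zfloor (x : R) : Z := (up x - 1)%Z.
Definition Zceil (x : R) : Z := (- Zfloor (- x))%Z.
Definition frac (x : R) : R := x - IZR (Zfloor x).

Definition irrational (x : R) : Prop :=
  ~ exists p q : Z, q <> 0%Z /\ x = IZR p / IZR q.

Definition word := nat -> bool.

Definition factor_at (u : word) (i n : nat) : list bool :=
  map (fun j => u (i + j)%nat) (seq 0 n).

Definition is_factor (u : word) (w : list bool) : Prop :=
  exists i, w = factor_at u i (length w).

Definition occ (x : bool) (w : list bool) : nat := count_occ Bool.bool_dec w x.

Definition balanced (u : word) : Prop :=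
  forall (x : bool) (v w : list bool), is_factor u v -> is_factor u w ->
    length v = length w ->
    (Z.abs (Z.of_nat (occ x v) - Z.of_nat (occ x w)) <= 1)%Z.

Definition eventually_periodic (u : word) : Prop :=
  exists p N : nat, (0 < p)%nat /\ forall k, (N <= k)%nat -> u (k + p)%nat = u k.

Definition sturmian (u : word) : Prop := balanced u /\ ~ eventually_periodic u.

Definition freq_b (u : word) (alpha : R) : Prop :=
  Un_cv (fun n => INR (occ true (factor_at u 0 (S n))) / INR (S n)) alpha.

Definition card_is (S : list bool -> Prop) (m : nat) : Prop :=
  exists l : list (list bool), NoDup l /\ (forall w, In w l <-> S w) /\ length l = m.

Definition P_set (u : word) (alpha : R) (n : nat) (w : list bool) : Prop :=
  is_factor u w /\ length w = n /\
  Z.of_nat (occ false w) = Zfloor ((1 - alpha) * INR n) /\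
  Z.of_nat (occ true w) = Zceil (INR n * alpha).

Definition rhs_count (alpha : R) (n : nat) : nat :=
  length (filter (fun k => if Rle_dec (frac (INR k * alpha)) (frac (INR n * alpha))
                           then true else false) (seq 1 n)).

(* Main.v *)
Require Import Defs.
From Stdlib Require Import Reals ZArith Arith List.
Open Scope R_scope.
From Stdlib Require Import Lra Lia Classical.
Require Import Defs.

Lemma Zfloor_spec x : IZR (Zfloor x) <= x < IZR (Zfloor x) + 1.
Proof.
  unfold Zfloor. destruct (archimed x) as [H1 H2].
  rewrite minus_IZR. lra.
Qed.

Lemma Zfloor_unique x z : IZR z <= x < IZR z + 1 -> Zfloor x = z.
Proof.
  intros [H1 H2]. destruct (Zfloor_spec x) as [H3 H4].
  assert (A : (z < Zfloor x + 1)%Z). { apply lt_IZR. rewrite plus_IZR. lra. }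
  assert (B : (Zfloor x < z + 1)%Z). { apply lt_IZR. rewrite plus_IZR. lra. }
  lia.
Qed.

Lemma frac_bounds x : 0 <= frac x < 1.
Proof. unfold frac. pose proof (Zfloor_spec x). lra. Qed.

Lemma IZR_small (z : Z) : -1 < IZR z < 1 -> z = 0%Z.
Proof.
  intros [H1 H2]. apply lt_IZR in H1. apply lt_IZR in H2. lia.
Qed.

Lemma irr_not_int (alpha : R) (Hirr : irrational alpha) (m : nat) (z : Z) :
  (1 <= m)%nat -> INR m * alpha <> IZR z.
Proof.
  intros Hm E. apply Hirr. exists z, (Z.of_nat m). split. lia.
  rewrite <- INR_IZR_INZ. rewrite <- E. field. apply not_0_INR. lia.
Qed.

Lemma irr_lin (alpha : R) (Hirr : irrational alpha) (a b : nat) (z : Z) :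
  INR a * alpha - INR b * alpha = IZR z -> a = b.
Proof.
  intros E. destruct (Nat.lt_total a b) as [H|[H|H]]; auto.
  - exfalso. apply (irr_not_int alpha Hirr (b - a) (- z)). lia.
    rewrite minus_INR by lia. rewrite opp_IZR. lra.
  - exfalso. apply (irr_not_int alpha Hirr (a - b) z). lia.
    rewrite minus_INR by lia. lra.
Qed.

Definition fl (alpha : R) (k : nat) : Z := Zfloor (INR k * alpha).
Definition pp (alpha : R) (k : nat) : R := frac (INR k * alpha).

Lemma fl_strict alpha (Hirr : irrational alpha) k : (1 <= k)%nat ->
  IZR (fl alpha k) < INR k * alpha < IZR (fl alpha k) + 1.
Proof.
  intros Hk. unfold fl. destruct (Zfloor_spec (INR k * alpha)).
  split; try lra. destruct H; auto. exfalso. symmetry in H.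
  eapply irr_not_int; eauto.
Qed.

Lemma pp_pos alpha (Hirr : irrational alpha) k : (1 <= k)%nat -> 0 < pp alpha k < 1.
Proof.
  intros Hk. pose proof (fl_strict alpha Hirr k Hk). unfold pp, frac. fold (fl alpha k). lra.
Qed.

Lemma pp_def alpha k : INR k * alpha = IZR (fl alpha k) + pp alpha k.
Proof. unfold pp, frac, fl. lra. Qed.

Lemma pp_inj alpha (Hirr : irrational alpha) a b : pp alpha a = pp alpha b -> a = b.
Proof.
  intros E. apply (irr_lin alpha Hirr a b (fl alpha a - fl alpha b)).
  rewrite minus_IZR. rewrite (pp_def alpha a), (pp_def alpha b). lra.
Qed.

Definition h (u : word) (i m : nat) : nat := occ true (factor_at u i m).

Lemma factor_at_S u i m : factor_at u i (S m) = factor_at u i m ++ (u (i + m)%nat :: nil).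
Proof. unfold factor_at. rewrite seq_S, map_app. reflexivity. Qed.

Lemma factor_at_length u i m : length (factor_at u i m) = m.
Proof. unfold factor_at. rewrite length_map, length_seq. reflexivity. Qed.

Definition b2n (b : bool) : nat := if b then 1%nat else 0%nat.

Lemma h_S u i m : h u i (S m) = (h u i m + b2n (u (i + m)%nat))%nat.
Proof.
  unfold h, occ. rewrite factor_at_S, count_occ_app. simpl.
  destruct (u (i+m)%nat); reflexivity.
Qed.

Lemma h_0 u i : h u i 0 = 0%nat.
Proof. reflexivity. Qed.

Lemma h_add u i m k : h u i (m + k) = (h u i m + h u (i + m) k)%nat.
Proof.
  induction k. rewrite Nat.add_0_r, h_0. lia.
  rewrite Nat.add_succ_r, !h_S, IHk. rewrite Nat.add_assoc. lia.
Qed.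

Lemma occ_sum w : (occ false w + occ true w)%nat = length w.
Proof.
  induction w as [|a w IH]; simpl. reflexivity.
  unfold occ in *. simpl. destruct a; simpl; lia.
Qed.

Lemma nth_factor u i n x : (x < n)%nat -> nth x (factor_at u i n) false = u (i + x)%nat.
Proof.
  intros Hx. unfold factor_at.
  rewrite nth_indep with (d' := u (i + 0)%nat) by (rewrite length_map, length_seq; auto).
  rewrite (map_nth (fun j => u (i + j)%nat)). rewrite seq_nth by auto. reflexivity.
Qed.

Lemma bal_h u (Hb : balanced u) i j m :
  (Z.abs (Z.of_nat (h u i m) - Z.of_nat (h u j m)) <= 1)%Z.
Proof.
  apply Hb. exists i; rewrite factor_at_length; reflexivity.
  exists j; rewrite factor_at_length; reflexivity.
  rewrite !factor_at_length; reflexivity.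
Qed.

Lemma mult_lower u m (c : Z) : (forall j, c <= Z.of_nat (h u j m))%Z ->
  forall K, (Z.of_nat K * c <= Z.of_nat (h u 0 (K * m)))%Z.
Proof.
  intros Hc K. induction K. simpl. lia.
  rewrite Nat.mul_succ_l, h_add. specialize (Hc (0 + K * m)%nat). lia.
Qed.

Lemma mult_upper u m (c : Z) : (forall j, Z.of_nat (h u j m) <= c)%Z ->
  forall K, (Z.of_nat (h u 0 (K * m)) <= Z.of_nat K * c)%Z.
Proof.
  intros Hc K. induction K. simpl. lia.
  rewrite Nat.mul_succ_l, h_add. specialize (Hc (0 + K * m)%nat). lia.
Qed.

Lemma freq_sub u alpha (Hf : freq_b u alpha) eps : 0 < eps -> forall m, (1 <= m)%nat ->
  exists K, (1 <= K)%nat /\ Rabs (INR (h u 0 (K * m)) / INR (K * m) - alpha) < eps.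
Proof.
  intros He m Hm. destruct (Hf eps He) as [N HN].
  exists (S N). split. lia.
  specialize (HN (S N * m - 1)%nat). unfold R_dist in HN.
  replace (S (S N * m - 1)) with (S N * m)%nat in HN by lia.
  apply HN. unfold ge. destruct m. lia. simpl. lia.
Qed.

Lemma step1 u alpha (Ha : 0 < alpha < 1) (Hirr : irrational alpha) (Hb : balanced u)
  (Hf : freq_b u alpha) i m : (1 <= m)%nat ->
  Z.of_nat (h u i m) = fl alpha m \/ Z.of_nat (h u i m) = (fl alpha m + 1)%Z.
Proof.
  intros Hm. pose proof (fl_strict alpha Hirr m Hm) as Hs.
  assert (Hmpos : 0 < INR m) by (apply lt_0_INR; lia).
  destruct (Z_lt_le_dec (Z.of_nat (h u i m)) (fl alpha m + 2)) as [H1|H1];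
  [destruct (Z_lt_le_dec (Z.of_nat (h u i m)) (fl alpha m)) as [H2|H2]|].
  - exfalso.
    assert (Hc : forall j, (Z.of_nat (h u j m) <= fl alpha m)%Z).
    { intro j. pose proof (bal_h u Hb i j m). lia. }
    pose proof (mult_upper u m _ Hc) as HK.
    set (eps := alpha - IZR (fl alpha m) / INR m).
    assert (He : 0 < eps). { unfold eps.
      assert (IZR (fl alpha m) / INR m < alpha); [|lra].
      apply Rmult_lt_reg_r with (INR m); auto. field_simplify; lra. }
    destruct (freq_sub u alpha Hf eps He m Hm) as [K [HK1 HK2]].
    specialize (HK K). apply IZR_le in HK. rewrite mult_IZR, <- !INR_IZR_INZ in HK.
    assert (HKm : 0 < INR (K * m)) by (apply lt_0_INR; lia).
    assert (INR (h u 0 (K * m)) / INR (K * m) <= IZR (fl alpha m) / INR m).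
    { apply Rmult_le_reg_r with (INR (K * m)); auto.
      rewrite mult_INR. rewrite mult_INR in HKm. field_simplify; try lra.
      assert (0 < INR K) by (apply lt_0_INR; lia). nra. }
    apply Rabs_def2 in HK2. unfold eps in HK2. lra.
  - lia.
  - exfalso.
    assert (Hc : forall j, (fl alpha m + 1 <= Z.of_nat (h u j m))%Z).
    { intro j. pose proof (bal_h u Hb i j m). lia. }
    pose proof (mult_lower u m _ Hc) as HK.
    set (eps := IZR (fl alpha m + 1) / INR m - alpha).
    assert (He : 0 < eps). { unfold eps.
      assert (alpha < IZR (fl alpha m + 1) / INR m); [|lra].
      apply Rmult_lt_reg_r with (INR m); auto. rewrite plus_IZR. field_simplify; lra. }
    destruct (freq_sub u alpha Hf eps He m Hm) as [K [HK1 HK2]].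
    specialize (HK K). apply IZR_le in HK. rewrite mult_IZR, <- !INR_IZR_INZ in HK.
    assert (HKm : 0 < INR (K * m)) by (apply lt_0_INR; lia).
    assert (IZR (fl alpha m + 1) / INR m <= INR (h u 0 (K * m)) / INR (K * m)).
    { apply Rmult_le_reg_r with (INR (K * m)); auto.
      rewrite mult_INR. rewrite mult_INR in HKm. field_simplify; try lra.
      assert (0 < INR K) by (apply lt_0_INR; lia). nra. }
    apply Rabs_def2 in HK2. unfold eps in HK2. lra.
Qed.

Definition d u alpha (i : nat) : R := INR (h u 0 i) - INR i * alpha.
Definition inT u alpha (i k : nat) : Prop := Z.of_nat (h u i k) = (fl alpha k + 1)%Z.

Lemma d_shift u alpha i m : d u alpha (i + m) - d u alpha i = INR (h u i m) - INR m * alpha.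
Proof. unfold d. rewrite h_add, plus_INR, plus_INR. simpl. lra. Qed.


Lemma d_step u alpha (Ha : 0 < alpha < 1) (Hirr : irrational alpha) (Hb : balanced u)
  (Hf : freq_b u alpha) i k : (1 <= k)%nat ->
  (inT u alpha i k /\ d u alpha (i + k) - d u alpha i = 1 - pp alpha k) \/
  (~ inT u alpha i k /\ d u alpha (i + k) - d u alpha i = - pp alpha k).
Proof.
  intros Hk. rewrite d_shift. unfold inT. rewrite (pp_def alpha k), INR_IZR_INZ.
  destruct (step1 u alpha Ha Hirr Hb Hf i k Hk) as [E|E]; rewrite E.
  - right. split. lia. lra.
  - left. split. auto. rewrite plus_IZR. lra.
Qed.

Lemma d_close u alpha (Ha : 0 < alpha < 1) (Hirr : irrational alpha) (Hb : balanced u)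
  (Hf : freq_b u alpha) a b : Rabs (d u alpha a - d u alpha b) < 1.
Proof.
  assert (K : forall i m, Rabs (d u alpha (i + m) - d u alpha i) < 1).
  { intros i [|m]. rewrite Nat.add_0_r. unfold Rminus. rewrite Rplus_opp_r, Rabs_R0. lra.
    destruct (d_step u alpha Ha Hirr Hb Hf i (S m)) as [[_ E]|[_ E]]; try lia;
    rewrite E; pose proof (pp_pos alpha Hirr (S m) ltac:(lia)); apply Rabs_def1; lra. }
  destruct (Nat.le_ge_cases a b) as [H|H].
  - replace b with (a + (b - a))%nat by lia. rewrite Rabs_minus_sym. apply K.
  - replace a with (b + (a - b))%nat by lia. apply K.
Qed.

Lemma exists_G u alpha (Ha : 0 < alpha < 1) (Hirr : irrational alpha) (Hb : balanced u)
  (Hf : freq_b u alpha) : exists G, forall j, G <= d u alpha j <= G + 1.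
Proof.
  set (E := fun x => exists j, x = - d u alpha j).
  assert (Hbd : bound E).
  { exists 1. intros x [j ->]. pose proof (d_close u alpha Ha Hirr Hb Hf j 0).
    unfold d at 2 in H. simpl in H. apply Rabs_def2 in H. unfold h, factor_at in H. simpl in H. lra. }
  assert (Hne : exists x, E x) by (exists (- d u alpha 0); exists 0%nat; auto).
  destruct (completeness E Hbd Hne) as [M [HM1 HM2]].
  exists (- M). intro j. split.
  - assert (E (- d u alpha j)) by (exists j; auto). apply HM1 in H. lra.
  - assert (M <= 1 - d u alpha j); [|lra]. apply HM2. intros x [j' ->].
    pose proof (d_close u alpha Ha Hirr Hb Hf j j'). apply Rabs_def2 in H. lra.
Qed.

Lemma F1 u alpha (Ha : 0 < alpha < 1) (Hirr : irrational alpha) (Hb : balanced u)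
  (Hf : freq_b u alpha) G (HG : forall j, G <= d u alpha j <= G + 1) i k :
  (1 <= k)%nat -> d u alpha i - G < pp alpha k -> inT u alpha i k.
Proof.
  intros Hk Hl. destruct (d_step u alpha Ha Hirr Hb Hf i k Hk) as [[A _]|[_ E]]; auto.
  pose proof (HG (i + k)%nat). lra.
Qed.

Lemma F2 u alpha (Ha : 0 < alpha < 1) (Hirr : irrational alpha) (Hb : balanced u)
  (Hf : freq_b u alpha) G (HG : forall j, G <= d u alpha j <= G + 1) i k :
  (1 <= k)%nat -> pp alpha k < d u alpha i - G -> ~ inT u alpha i k.
Proof.
  intros Hk Hl. destruct (d_step u alpha Ha Hirr Hb Hf i k Hk) as [[_ E]|[A _]]; auto.
  pose proof (HG (i + k)%nat). lra.
Qed.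

Lemma F3 u alpha (Ha : 0 < alpha < 1) (Hirr : irrational alpha) (Hb : balanced u)
  (Hf : freq_b u alpha) i k k' : (1 <= k)%nat -> (1 <= k')%nat ->
  inT u alpha i k -> ~ inT u alpha i k' -> pp alpha k' < pp alpha k.
Proof.
  intros Hk Hk' I1 I2.
  destruct (d_step u alpha Ha Hirr Hb Hf i k Hk) as [[_ E1]|[N _]]; [|contradiction].
  destruct (d_step u alpha Ha Hirr Hb Hf i k' Hk') as [[N _]|[_ E2]]; [contradiction|].
  pose proof (d_close u alpha Ha Hirr Hb Hf (i + k) (i + k')). apply Rabs_def2 in H. lra.
Qed.

Lemma C1 u alpha (Ha : 0 < alpha < 1) (Hirr : irrational alpha) (Hb : balanced u)
  (Hf : freq_b u alpha) n i j :
  (forall k, (1 <= k <= n)%nat -> (inT u alpha i k <-> inT u alpha j k)) ->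
  factor_at u i n = factor_at u j n.
Proof.
  intros Hij.
  assert (Hh : forall k, (k <= n)%nat -> h u i k = h u j k).
  { intros [|k] Hk. reflexivity.
    specialize (Hij (S k) ltac:(lia)). unfold inT in Hij.
    destruct (step1 u alpha Ha Hirr Hb Hf i (S k) ltac:(lia)) as [E1|E1];
    destruct (step1 u alpha Ha Hirr Hb Hf j (S k) ltac:(lia)) as [E2|E2];
    first [ apply Nat2Z.inj; lia
          | exfalso; apply Hij in E2; lia
          | exfalso; apply Hij in E1; lia ]. }
  unfold factor_at. apply map_ext_in. intros x Hx. apply in_seq in Hx.
  pose proof (Hh (S x) ltac:(lia)). pose proof (Hh x ltac:(lia)).
  rewrite !h_S in H. unfold b2n in H.
  destruct (u (i + x)%nat), (u (j + x)%nat); auto; lia.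
Qed.

Lemma C1' u alpha n i j : factor_at u i n = factor_at u j n ->
  forall k, (1 <= k <= n)%nat -> (inT u alpha i k <-> inT u alpha j k).
Proof.
  intros E.
  assert (Hh : forall k, (k <= n)%nat -> h u i k = h u j k).
  { induction k; intros Hk. reflexivity.
    rewrite !h_S, IHk by lia.
    rewrite <- (nth_factor u i n k), <- (nth_factor u j n k), E by lia. reflexivity. }
  intros k Hk. unfold inT. rewrite Hh by lia. tauto.
Qed.

Lemma walk c x y eta : 0 < eta < y - x ->
  exists (i : nat) (z : Z), x < c - INR i * eta + IZR z < y.
Proof.
  intros He.
  set (z := (- Zfloor (c - y))%Z).
  set (t := c + IZR z - y).
  assert (Ht : 0 <= t). { unfold t, z. rewrite opp_IZR. pose proof (Zfloor_spec (c - y)). lra. }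
  set (q := Zfloor (t / eta)).
  assert (Hq : (0 <= q)%Z).
  { assert (-1 < q)%Z; [|lia]. apply lt_IZR. pose proof (Zfloor_spec (t / eta)).
    assert (0 <= t / eta) by (unfold Rdiv; apply Rmult_le_pos; [lra| left; apply Rinv_0_lt_compat; lra]). fold q in H. lra. }
  exists (Z.to_nat (q + 1)), z.
  rewrite INR_IZR_INZ, Z2Nat.id by lia. rewrite plus_IZR.
  pose proof (Zfloor_spec (t / eta)) as Hs. fold q in Hs.
  assert (A : t < (IZR q + 1) * eta).
  { apply Rmult_lt_reg_r with (/ eta). apply Rinv_0_lt_compat; lra.
    rewrite Rmult_assoc, Rinv_r, Rmult_1_r by lra. unfold Rdiv in Hs. lra. }
  assert (B : IZR q * eta <= t).
  { apply Rmult_le_reg_r with (/ eta). apply Rinv_0_lt_compat; lra.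
    rewrite Rmult_assoc, Rinv_r, Rmult_1_r by lra. unfold Rdiv in Hs. lra. }
  unfold t in *. lra.
Qed.

Lemma Zfloor_nonneg x : 0 <= x -> (0 <= Zfloor x)%Z.
Proof. intros H. assert (-1 < Zfloor x)%Z; [|lia]. apply lt_IZR. pose proof (Zfloor_spec x). lra. Qed.

Lemma pigeon alpha (Hirr : irrational alpha) eps : 0 < eps ->
  exists (m : nat) (z : Z) (eta : R), (1 <= m)%nat /\ 0 < eta < eps /\
    (INR m * alpha = IZR z + eta \/ INR m * alpha = IZR z - eta).
Proof.
  intros He.
  destruct (archimed (/ eps)) as [U1 _].
  assert (Hie : 0 < / eps) by (apply Rinv_0_lt_compat; lra).
  set (N := Z.to_nat (up (/ eps))).
  assert (HN : INR N = IZR (up (/ eps))).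
  { unfold N. rewrite INR_IZR_INZ, Z2Nat.id. reflexivity. apply le_IZR. lra. }
  assert (HN1 : (1 <= N)%nat). { apply INR_le. rewrite HN. simpl. assert (0 < up (/eps))%Z by (apply lt_IZR; lra).
    apply IZR_le. lia. }
  assert (HNe : 1 < eps * INR N).
  { rewrite HN. apply Rmult_lt_reg_l with (/ eps); auto.
    rewrite <- Rmult_assoc, Rinv_l, Rmult_1_l, Rmult_1_r by lra. lra. }
  set (box := fun j => Z.to_nat (Zfloor (INR N * pp alpha j))).
  assert (Hbox : forall j, (box j < N)%nat).
  { intro j. unfold box. pose proof (frac_bounds (INR j * alpha)). fold (pp alpha j) in H.
    assert (0 <= INR N * pp alpha j) by (apply Rmult_le_pos; [apply pos_INR| lra]).
    pose proof (Zfloor_nonneg _ H0). pose proof (Zfloor_spec (INR N * pp alpha j)).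
    assert (Zfloor (INR N * pp alpha j) < Z.of_nat N)%Z.
    { apply lt_IZR. rewrite <- INR_IZR_INZ. assert (0 < INR N) by (apply lt_0_INR; lia). nra. }
    lia. }
  assert (HnND : ~ NoDup (map box (seq 0 (S N)))).
  { intro ND. apply NoDup_incl_length with (l' := seq 0 N) in ND.
    rewrite length_map, !length_seq in ND. lia.
    intros x Hx. apply in_map_iff in Hx. destruct Hx as [j [<- _]]. apply in_seq. split. lia. apply Hbox. }
  destruct (classic (exists a b, In a (seq 0 (S N)) /\ In b (seq 0 (S N)) /\ box a = box b /\ a <> b))
    as [[a [b [_ [_ [Eab Nab]]]]]|Hno].
  2:{ exfalso. apply HnND. apply NoDup_map_NoDup_ForallPairs. 2: apply seq_NoDup.
      intros a b Ha Hb E. apply NNPP. intro. apply Hno. eauto 10. }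
  assert (Hclose : forall j1 j2, box j1 = box j2 -> Rabs (pp alpha j2 - pp alpha j1) < eps).
  { intros j1 j2 E. unfold box in E.
    assert (E' : Zfloor (INR N * pp alpha j1) = Zfloor (INR N * pp alpha j2)).
    { pose proof (frac_bounds (INR j1 * alpha)). pose proof (frac_bounds (INR j2 * alpha)).
      fold (pp alpha j1) in H. fold (pp alpha j2) in H0.
      rewrite <- (Z2Nat.id (Zfloor (INR N * pp alpha j1))), <- (Z2Nat.id (Zfloor (INR N * pp alpha j2))), E;
      try reflexivity; apply Zfloor_nonneg; apply Rmult_le_pos; try apply pos_INR; lra. }
    pose proof (Zfloor_spec (INR N * pp alpha j1)). pose proof (Zfloor_spec (INR N * pp alpha j2)).
    rewrite E' in H. assert (Hd : Rabs (INR N * (pp alpha j2 - pp alpha j1)) < 1).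
    { apply Rabs_def1; lra. }
    rewrite Rabs_mult, Rabs_pos_eq in Hd by apply pos_INR.
    assert (0 < INR N) by (apply lt_0_INR; lia).
    assert (0 <= Rabs (pp alpha j2 - pp alpha j1)) by apply Rabs_pos.
    nra. }
  assert (Main : forall j1 j2, (j1 < j2)%nat -> box j1 = box j2 ->
    exists (m : nat) (z : Z) (eta : R), (1 <= m)%nat /\ 0 < eta < eps /\
    (INR m * alpha = IZR z + eta \/ INR m * alpha = IZR z - eta)).
  { intros j1 j2 Hlt E. pose proof (Hclose j1 j2 E) as Hc.
    exists (j2 - j1)%nat, (fl alpha j2 - fl alpha j1)%Z.
    assert (Hne : pp alpha j2 <> pp alpha j1) by (intro X; apply pp_inj in X; auto; lia).
    assert (Hm : INR (j2 - j1) * alpha = IZR (fl alpha j2 - fl alpha j1) + (pp alpha j2 - pp alpha j1)).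
    { rewrite minus_INR by lia. rewrite minus_IZR. pose proof (pp_def alpha j1). pose proof (pp_def alpha j2). lra. }
    destruct (Rlt_le_dec (pp alpha j1) (pp alpha j2)).
    - exists (pp alpha j2 - pp alpha j1). split. lia. apply Rabs_def2 in Hc. split. lra. left. lra.
    - exists (pp alpha j1 - pp alpha j2). split. lia. apply Rabs_def2 in Hc. split. lra. right. lra. }
  destruct (Nat.lt_total a b) as [L|[L|L]]. apply (Main a b); auto. contradiction. apply (Main b a); auto.
Qed.

Lemma dens alpha (Hirr : irrational alpha) c x y : x < y ->
  exists (i : nat) (z : Z), x < c - INR i * alpha + IZR z < y.
Proof.
  intros Hxy. destruct (pigeon alpha Hirr (y - x) ltac:(lra)) as [m [z [eta [Hm [He [E|E]]]]]].
  - destruct (walk c x y eta ltac:(lra)) as [i [z' H]].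
    exists (i * m)%nat, (z' + Z.of_nat i * z)%Z.
    rewrite mult_INR, plus_IZR, mult_IZR, <- INR_IZR_INZ.
    replace (c - INR i * INR m * alpha + (IZR z' + INR i * IZR z)) with
      (c - INR i * (INR m * alpha) + (IZR z' + INR i * IZR z)) by ring.
    rewrite E. lra.
  - destruct (walk (- c) (- y) (- x) eta ltac:(lra)) as [i [z' H]].
    exists (i * m)%nat, (- z' + Z.of_nat i * z)%Z.
    rewrite mult_INR, plus_IZR, mult_IZR, opp_IZR, <- INR_IZR_INZ.
    replace (c - INR i * INR m * alpha + (- IZR z' + INR i * IZR z)) with
      (c - INR i * (INR m * alpha) + (- IZR z' + INR i * IZR z)) by ring.
    rewrite E. lra.
Qed.

Lemma eps_list (l : list nat) (g : nat -> R) c : 0 < c ->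
  exists eps, 0 < eps <= c /\ forall j, In j l -> g j < c -> g j <= c - eps.
Proof.
  intros Hc. induction l as [|a l IH].
  - exists c. split. lra. intros j [].
  - destruct IH as [e [He H]]. destruct (Rlt_le_dec (g a) c).
    + exists (Rmin e (c - g a)). split.
      split. apply Rmin_glb_lt; lra. pose proof (Rmin_l e (c - g a)). lra.
      intros j [<-|Hj] Hl. pose proof (Rmin_r e (c - g a)). lra.
      pose proof (H j Hj Hl). pose proof (Rmin_l e (c - g a)). lra.
    + exists e. split. auto. intros j [<-|Hj] Hl. lra. auto.
Qed.

Lemma choice_list (l : list nat) (P : nat -> nat -> Prop) :
  (forall k, In k l -> exists i, P k i) -> exists f, forall k, In k l -> P k (f k).
Proof.
  induction l as [|a l IH]; intros H.
  - exists (fun _ => 0%nat). intros k [].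
  - destruct (H a (or_introl eq_refl)) as [i0 Hi0].
    destruct IH as [f Hf]. intros k Hk. apply H. right. auto.
    exists (fun x => if Nat.eq_dec x a then i0 else f x). intros k [<-|Hk].
    + destruct (Nat.eq_dec a a). auto. congruence.
    + destruct (Nat.eq_dec k a). subst. auto. auto.
Qed.

Lemma min_list (l : list nat) (P : nat -> Prop) (g : nat -> R) :
  (exists j, In j l /\ P j) -> exists j0, In j0 l /\ P j0 /\ forall j, In j l -> P j -> g j0 <= g j.
Proof.
  induction l as [|a l IH]; intros [j [Hj Pj]].
  - destruct Hj.
  - destruct (classic (exists j, In j l /\ P j)) as [Ex|Nex].
    + destruct (IH Ex) as [j0 [I0 [P0 M0]]].
      destruct (classic (P a)) as [Pa|Pa].
      * destruct (Rle_dec (g a) (g j0)).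
        -- exists a. split. left; auto. split. auto. intros j' [<-|I'] P'. lra. pose proof (M0 j' I' P'). lra.
        -- exists j0. split. right; auto. split. auto. intros j' [<-|I'] P'. lra. auto.
      * exists j0. split. right; auto. split. auto. intros j' [<-|I'] P'. contradiction. auto.
    + destruct Hj as [<-|Hj]. 2:{ exfalso. apply Nex. eauto. }
      exists a. split. left; auto. split. auto. intros j' [<-|I'] P'. lra. exfalso. apply Nex. eauto.
Qed.

Lemma realize u alpha (Ha : 0 < alpha < 1) (Hirr : irrational alpha) (Hb : balanced u)
  (Hf : freq_b u alpha) n k : (1 <= k <= n)%nat ->
  exists i, forall j, (1 <= j <= n)%nat -> (inT u alpha i j <-> pp alpha k <= pp alpha j).
Proof.
  intros Hk. destruct (exists_G u alpha Ha Hirr Hb Hf) as [G HG].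
  pose proof (pp_pos alpha Hirr k ltac:(lia)) as Hpk.
  destruct (eps_list (seq 1 n) (pp alpha) (pp alpha k) ltac:(lra)) as [e [He Hel]].
  destruct (dens alpha Hirr (- G) (pp alpha k - e) (pp alpha k) ltac:(lra)) as [i [z Hi]].
  assert (Hd : d u alpha i - G = - G - INR i * alpha + IZR z).
  { assert (Z.of_nat (h u 0 i) - z = 0)%Z.
    { apply IZR_small. rewrite minus_IZR, <- INR_IZR_INZ. pose proof (HG i). unfold d in H. lra. }
    unfold d. rewrite INR_IZR_INZ. replace (Z.of_nat (h u 0 i)) with z by lia. lra. }
  exists i. intros j Hj. split.
  - intros Ij. destruct (Rle_dec (pp alpha k) (pp alpha j)) as [|N]; auto.
    exfalso. apply Rnot_le_lt in N. pose proof (Hel j ltac:(apply in_seq; lia) N).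
    apply (F2 u alpha Ha Hirr Hb Hf G HG i j ltac:(lia)); auto. lra.
  - intros Hle. apply (F1 u alpha Ha Hirr Hb Hf G HG i j ltac:(lia)). lra.
Qed.

Lemma zceil_n alpha (Hirr : irrational alpha) n : (1 <= n)%nat ->
  Zceil (INR n * alpha) = (fl alpha n + 1)%Z.
Proof.
  intros Hn. unfold Zceil. pose proof (fl_strict alpha Hirr n Hn).
  rewrite (Zfloor_unique (- (INR n * alpha)) (- fl alpha n - 1)). lia.
  rewrite minus_IZR, opp_IZR. lra.
Qed.

Lemma zfloor_n alpha (Hirr : irrational alpha) n : (1 <= n)%nat ->
  Zfloor ((1 - alpha) * INR n) = (Z.of_nat n - fl alpha n - 1)%Z.
Proof.
  intros Hn. pose proof (fl_strict alpha Hirr n Hn). apply Zfloor_unique.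
  rewrite !minus_IZR, <- INR_IZR_INZ. lra.
Qed.

Theorem lemma2 (alpha : R) (Ha : 0 < alpha < 1) (Hirr : irrational alpha)
  (u : word) (Hu : sturmian u) (Hf : freq_b u alpha) :
  forall n : nat, (1 <= n)%nat -> card_is (P_set u alpha n) (rhs_count alpha n).
Proof.
  intros n Hn. destruct Hu as [Hb _].
  set (flt := fun k => if Rle_dec (frac (INR k * alpha)) (frac (INR n * alpha)) then true else false).
  set (ks := filter flt (seq 1 n)).
  assert (Hks : forall k, In k ks <-> (1 <= k <= n)%nat /\ pp alpha k <= pp alpha n).
  { intro k. unfold ks. rewrite filter_In, in_seq. unfold flt, pp.
    destruct (Rle_dec (frac (INR k * alpha)) (frac (INR n * alpha))); split; intros [A B];
      split; try lia; auto; try discriminate; contradiction. }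
  destruct (choice_list (seq 1 n)
    (fun k i => forall j, (1 <= j <= n)%nat -> (inT u alpha i j <-> pp alpha k <= pp alpha j)))
    as [f Hfk].
  { intros k Hk. apply in_seq in Hk. apply realize; auto. lia. }
  assert (Hfk' : forall k, (1 <= k <= n)%nat -> forall j, (1 <= j <= n)%nat ->
      (inT u alpha (f k) j <-> pp alpha k <= pp alpha j)).
  { intros k Hk. apply Hfk. apply in_seq. lia. }
  exists (map (fun k => factor_at u (f k) n) ks). split; [|split].
  - apply NoDup_map_NoDup_ForallPairs. 2:{ apply NoDup_filter, seq_NoDup. }
    intros a b Ia Ib E. apply Hks in Ia. apply Hks in Ib.
    pose proof (C1' u alpha n _ _ E) as C.
    assert (pp alpha a <= pp alpha b).
    { apply (Hfk' a); try lia. apply C. lia. apply (Hfk' b); try lia. lra. }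
    assert (pp alpha b <= pp alpha a).
    { apply (Hfk' b); try lia. apply C. lia. apply (Hfk' a); try lia. lra. }
    apply (pp_inj alpha Hirr). lra.
  - intro w. rewrite in_map_iff. split.
    + intros [k [<- Ik]]. apply Hks in Ik. destruct Ik as [Ik Ikn].
      assert (In_n : inT u alpha (f k) n) by (apply (Hfk' k); auto; lia).
      unfold inT in In_n.
      unfold P_set. split; [|split; [|split]].
      * exists (f k). rewrite factor_at_length. reflexivity.
      * apply factor_at_length.
      * rewrite zfloor_n by auto. pose proof (occ_sum (factor_at u (f k) n)).
        rewrite factor_at_length in H. unfold h in In_n. lia.
      * rewrite zceil_n by auto. exact In_n.
    + intros [[i Ei] [Hl [_ Ht]]]. rewrite Hl in Ei.
      rewrite zceil_n in Ht by auto. rewrite Ei in Ht. fold (h u i n) in Ht.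
      destruct (min_list (seq 1 n) (inT u alpha i) (pp alpha)) as [K [IK [PK MK]]].
      { exists n. split. apply in_seq. lia. exact Ht. }
      apply in_seq in IK.
      assert (Tiff : forall j, (1 <= j <= n)%nat -> (inT u alpha i j <-> pp alpha K <= pp alpha j)).
      { intros j Hj. split. intro Ij. apply MK; auto. apply in_seq; lia.
        intros Hle. apply NNPP. intro N.
        pose proof (F3 u alpha Ha Hirr Hb Hf i K j ltac:(lia) ltac:(lia) PK N). lra. }
      exists K. split.
      * rewrite Ei. apply (C1 u alpha Ha Hirr Hb Hf). intros k Hk.
        rewrite (Hfk' K ltac:(lia) k Hk). symmetry. apply Tiff; auto.
      * apply Hks. split. lia. apply MK. apply in_seq; lia. exact Ht.
  - rewrite length_map. reflexivity.
Qed.
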